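(* Let $\beta>0$, $C>0$, and let $\{a_j\}_{j\ge1}$ be a monotone non-increasing sequence with $0\le a_j\le C\,j^{-1-\beta}$ for all $j$. Then for any positive integers $k,m$ and any $\nu\in[1,1+\beta)$, $$\sum_{j=m}^\infty[a_j-a_{j+k}]\,j^\nu\le C\,k\,\frac{\beta+1}{\beta+1-\nu}\,m^{\nu-1-\beta}<\infty.$$ *)

(* Defs.v *)
From Stdlib Require Import Reals.
From Coquelicot Require Export Coquelicot.
Open Scope R_scope.

(* Main.v *)
Require Import Defs.
From Stdlib Require Import Reals Lra Lia.
From Coquelicot Require Import Coquelicot.
Open Scope R_scope.

Lemma pw_pos x p : 0 < Rpower x p.
Proof. unfold Rpower. apply exp_pos. Qed.

Lemma pw_anti x y p : 0 < x <= y -> p <= 0 -> Rpower y p <= Rpower x p.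
Proof.
  intros [Hx Hxy] Hp. destruct (Req_dec x y) as [->|Hne]. lra.
  assert (Hl : ln x < ln y) by (apply ln_increasing; lra).
  unfold Rpower. destruct (Req_dec p 0) as [->|Hp0].
  rewrite !Rmult_0_l; lra.
  left. apply exp_increasing. nra.
Qed.

Lemma lemA x nu : 1 <= x -> 1 <= nu ->
  Rpower (x+1) nu - Rpower x nu <= nu * Rpower (x+1) (nu-1).
Proof.
  intros Hx Hnu.
  destruct (MVT_cor2 (fun t => Rpower t nu) (fun t => nu * Rpower t (nu - 1)) x (x+1))
    as [c [Hc1 Hc2]].
  lra. intros c Hc. apply derivable_pt_lim_power. lra.
  rewrite Hc1. replace (x+1-x) with 1 by ring. rewrite Rmult_1_r.
  apply Rmult_le_compat_l. lra. apply Rle_Rpower_l. lra. lra.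
Qed.

Lemma lemB x g : 1 <= x -> 0 < g ->
  g * Rpower (x+1) (-g-1) <= Rpower x (-g) - Rpower (x+1) (-g).
Proof.
  intros Hx Hg.
  destruct (MVT_cor2 (fun t => Rpower t (-g)) (fun t => -g * Rpower t (-g - 1)) x (x+1))
    as [c [Hc1 Hc2]].
  lra. intros c Hc. apply derivable_pt_lim_power. lra.
  replace (Rpower x (-g) - Rpower (x+1) (-g)) with (-(Rpower (x+1) (-g) - Rpower x (-g))) by ring.
  rewrite Hc1. replace (x+1-x) with 1 by ring.
  assert (Rpower (x+1) (-g-1) <= Rpower c (-g-1)) by (apply pw_anti; lra).
  nra.
Qed.

Lemma series_bound (b : nat -> R) (B : R) :
  (forall n, 0 <= b n) -> (forall N, sum_f_R0 b N <= B) ->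
  ex_series b /\ Series b <= B.
Proof.
  intros H0 HB.
  assert (Hinc : forall n, sum_n b n <= sum_n b (S n)).
  { intros n. rewrite !sum_n_Reals. simpl. specialize (H0 (S n)). lra. }
  destruct (ex_lim_seq_incr _ Hinc) as [l Hl].
  assert (Hle : Rbar_le l B).
  { apply (is_lim_seq_le (sum_n b) (fun _ => B) l B).
    - intros n; rewrite sum_n_Reals; apply HB.
    - exact Hl.
    - apply is_lim_seq_const. }
  assert (Hge : Rbar_le (sum_n b 0) l).
  { apply (is_lim_seq_le (fun _ => sum_n b 0) (sum_n b) (sum_n b 0) l).
    - intros n. induction n. lra. eapply Rle_trans. apply IHn. apply Hinc.
    - apply is_lim_seq_const.
    - exact Hl. }
  destruct l as [x| |]; simpl in Hle, Hge; try contradiction.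
  split.
  - exists x. exact Hl.
  - unfold Series. rewrite (is_lim_seq_unique _ _ Hl). simpl. exact Hle.
Qed.

Section Main.
Variables (beta C : R) (a : nat -> R)
  (hbeta : 0 < beta) (hC : 0 < C)
  (hmono : forall j : nat, (1 <= j)%nat -> a (S j) <= a j)
  (hnonneg : forall j : nat, (1 <= j)%nat -> 0 <= a j)
  (hbound : forall j : nat, (1 <= j)%nat -> a j <= C * Rpower (INR j) (-1 - beta))
  (nu : R) (hnu1 : 1 <= nu) (hnu2 : nu < 1 + beta).

Lemma mono_t j t : (1 <= j)%nat -> a (j + t)%nat <= a j.
Proof.
  intros Hj. induction t. rewrite Nat.add_0_r; lra.
  rewrite Nat.add_succ_r. eapply Rle_trans. apply hmono. lia. exact IHt.
Qed.

Lemma lemT m' (hm' : (1 <= m')%nat) N :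
  sum_f_R0 (fun n => (a (n+m')%nat - a (S (n+m'))) * Rpower (INR (n+m')) nu) N
  + a (S (N+m')) * Rpower (INR (N+m')) nu
  <= C * Rpower (INR m') (nu-1-beta)
     + C*nu*(Rpower (INR m') (-(1+beta-nu)) - Rpower (INR (N+m')) (-(1+beta-nu)))/(1+beta-nu).
Proof.
  assert (Hg : 0 < 1+beta-nu) by lra.
  induction N.
  - simpl. replace (Rpower (INR m') (-(1+beta-nu)) - Rpower (INR m') (-(1+beta-nu))) with 0 by ring.
    assert (H1 := hbound m' hm').
    assert (Hp := pw_pos (INR m') nu).
    replace (nu-1-beta) with ((-1-beta)+nu) by ring. rewrite Rpower_plus.
    assert (a m' * Rpower (INR m') nu <= C * Rpower (INR m') (-1 - beta) * Rpower (INR m') nu)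
      by (apply Rmult_le_compat_r; lra).
    unfold Rdiv. rewrite Rmult_0_r, Rmult_0_l. lra.
  - set (g := 1+beta-nu) in *.
    rewrite tech5.
    replace (S N + m')%nat with (S (N + m')) by lia.
    set (M := (N + m')%nat) in *.
    assert (HM : (1 <= M)%nat) by (unfold M; lia).
    rewrite S_INR. set (x := INR M) in *.
    assert (Hx : 1 <= x) by (unfold x; apply (le_INR 1); lia).
    assert (HA := lemA x nu Hx hnu1).
    assert (HB := lemB x g Hx Hg).
    assert (Ha0 : 0 <= a (S M)) by (apply hnonneg; lia).
    assert (Hab : a (S M) <= C * Rpower (INR (S M)) (-1 - beta)) by (apply hbound; lia).
    rewrite S_INR in Hab. fold x in Hab.
    assert (HE : Rpower (x+1) (-1-beta) * Rpower (x+1) (nu-1) = Rpower (x+1) (-g-1)).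
    { rewrite <- Rpower_plus. f_equal. unfold g. ring. }
    assert (HQ := pw_pos (x+1) (nu-1)).
    assert (S1 : a (S M) * (Rpower (x+1) nu - Rpower x nu) <= a (S M) * (nu * Rpower (x+1) (nu-1)))
      by (apply Rmult_le_compat_l; lra).
    assert (S2 : a (S M) * (nu * Rpower (x+1) (nu-1)) <= C * Rpower (x+1) (-1-beta) * (nu * Rpower (x+1) (nu-1)))
      by (apply Rmult_le_compat_r; nra).
    assert (S3 : C * nu * (g * Rpower (x+1) (-g-1)) <= C*nu*(Rpower x (-g) - Rpower (x+1) (-g)))
      by (apply Rmult_le_compat_l; nra).
    assert (S4 : C * Rpower (x+1) (-1-beta) * (nu * Rpower (x+1) (nu-1)) = C*nu*Rpower (x+1) (-g-1)).
    { rewrite <- HE. ring. }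
    replace (-g) with (-(g)) by ring.
    assert (Hfin : a (S M) * (Rpower (x+1) nu - Rpower x nu) <=
              C*nu*(Rpower x (-g) - Rpower (x+1) (-g))/g).
    { apply Rmult_le_reg_r with g. lra.
      replace (C*nu*(Rpower x (-g) - Rpower (x+1) (-g))/g*g) with (C*nu*(Rpower x (-g) - Rpower (x+1) (-g))) by (field; lra).
      nra. }
    unfold Rdiv in *. 
    replace (C * nu * (Rpower (INR m') (- g) - Rpower (x + 1) (- g)) * / g) with
      (C * nu * (Rpower (INR m') (- g) - Rpower x (- g)) * / g + C * nu * (Rpower x (- g) - Rpower (x + 1) (- g)) * / g) by ring.
    lra.
Qed.

Lemma lemS m' (hm' : (1 <= m')%nat) N :
  sum_f_R0 (fun n => (a (n+m')%nat - a (S (n+m'))) * Rpower (INR (n+m')) nu) N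
  <= C * ((beta+1)/(beta+1-nu)) * Rpower (INR m') (nu-1-beta).
Proof.
  assert (H := lemT m' hm' N).
  assert (Hg : 0 < 1+beta-nu) by lra.
  assert (H1 : 0 <= a (S (N+m'))) by (apply hnonneg; lia).
  assert (H2 := pw_pos (INR (N+m')) nu).
  assert (H3 := pw_pos (INR (N+m')) (-(1+beta-nu))).
  replace (-(1+beta-nu)) with (nu-1-beta) in H by ring.
  replace (-(1+beta-nu)) with (nu-1-beta) in H3 by ring.
  set (P := Rpower (INR m') (nu-1-beta)) in *.
  set (Q := Rpower (INR (N+m')) (nu-1-beta)) in *.
  assert (E : C * P + C*nu*(P - Q)/(1+beta-nu) = C * ((beta+1)/(beta+1-nu)) * P - C*nu*Q/(1+beta-nu))
    by (field; lra).
  assert (0 <= C*nu*Q/(1+beta-nu)).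
  { unfold Rdiv. apply Rmult_le_pos. apply Rmult_le_pos. apply Rmult_le_pos; lra. lra. left; apply Rinv_0_lt_compat; lra. }
  assert (0 <= a (S (N+m')) * Rpower (INR (N+m')) nu) by (apply Rmult_le_pos; lra).
  lra.
Qed.

Lemma lemK m (hm : (1 <= m)%nat) k N :
  sum_f_R0 (fun n => (a (n + m)%nat - a (n + m + k)%nat) * Rpower (INR (n + m)) nu) N
  <= INR k * (C * ((beta+1)/(beta+1-nu)) * Rpower (INR m) (nu-1-beta)).
Proof.
  induction k.
  - simpl. rewrite Rmult_0_l.
    induction N.
    + simpl. rewrite !Nat.add_0_r. unfold Rminus. rewrite Rplus_opp_r, Rmult_0_l. lra.
    + rewrite tech5. rewrite !Nat.add_0_r. unfold Rminus. rewrite Rplus_opp_r, Rmult_0_l. unfold Rminus in IHN. lra.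
  - rewrite S_INR.
    assert (Hc : 0 <= C * ((beta+1)/(beta+1-nu)) * Rpower (INR m) (nu-1-beta) -
      C * ((beta+1)/(beta+1-nu)) * Rpower (INR (m+k)) (nu-1-beta)).
    { assert (Rpower (INR (m+k)) (nu-1-beta) <= Rpower (INR m) (nu-1-beta)).
      { apply pw_anti. split. apply (lt_INR 0); lia. apply le_INR; lia. lra. }
      assert (0 < (beta+1)/(beta+1-nu)) by (apply Rdiv_lt_0_compat; lra).
      assert (0 < C * ((beta+1)/(beta+1-nu))) by (apply Rmult_lt_0_compat; lra).
      assert (C * ((beta+1)/(beta+1-nu)) * Rpower (INR (m+k)) (nu-1-beta) <= C * ((beta+1)/(beta+1-nu)) * Rpower (INR m) (nu-1-beta))
        by (apply Rmult_le_compat_l; lra).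
      lra. }
    assert (HS := lemS (m+k) ltac:(lia) N).
    assert (Hle : sum_f_R0 (fun n => (a (n + m)%nat - a (n + m + S k)%nat) * Rpower (INR (n + m)) nu) N
       <= sum_f_R0 (fun n => (a (n + m)%nat - a (n + m + k)%nat) * Rpower (INR (n + m)) nu) N
        + sum_f_R0 (fun n => (a (n+(m+k))%nat - a (S (n+(m+k)))) * Rpower (INR (n+(m+k))) nu) N).
    { rewrite <- sum_plus. apply sum_Rle. intros n _.
      replace (n + m + S k)%nat with (S (n + (m+k))) by lia.
      replace (n + m + k)%nat with (n + (m+k))%nat by lia.
      assert (Hd : 0 <= a (n + (m+k))%nat - a (S (n + (m+k)))).
      { assert (a (S (n + (m+k))) <= a (n + (m+k))%nat) by (apply hmono; lia). lra. }
      assert (Hp : Rpower (INR (n+m)) nu <= Rpower (INR (n+(m+k))) nu).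
      { apply Rle_Rpower_l. lra. split. apply (lt_INR 0); lia. apply le_INR; lia. }
      nra. }
    lra.
Qed.
End Main.

Theorem lemma1p9 (beta C : R) (a : nat -> R)
  (hbeta : 0 < beta) (hC : 0 < C)
  (hmono : forall j : nat, (1 <= j)%nat -> a (S j) <= a j)
  (hnonneg : forall j : nat, (1 <= j)%nat -> 0 <= a j)
  (hbound : forall j : nat, (1 <= j)%nat -> a j <= C * Rpower (INR j) (-1 - beta))
  (k m : nat) (hk : (1 <= k)%nat) (hm : (1 <= m)%nat)
  (nu : R) (hnu1 : 1 <= nu) (hnu2 : nu < 1 + beta) :
  ex_series (fun n : nat => (a (n + m)%nat - a (n + m + k)%nat) * Rpower (INR (n + m)) nu)
  /\ Series (fun n : nat => (a (n + m)%nat - a (n + m + k)%nat) * Rpower (INR (n + m)) nu)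
     <= C * INR k * ((beta + 1) / (beta + 1 - nu)) * Rpower (INR m) (nu - 1 - beta).
Proof.
  apply series_bound.
  - intros n. apply Rmult_le_pos.
    + assert (a (n+m+k)%nat <= a (n+m)%nat) by (apply (mono_t a hmono); lia). lra.
    + left; apply pw_pos.
  - intros N. eapply Rle_trans.
    apply (lemK beta C a hbeta hC hmono hnonneg hbound nu hnu1 hnu2 m hm k N).
    right; ring.
Qed.
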